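(* For every $\rho\in(0,\tfrac12)$, the scalar equation $x'=-\bigl(x+\tfrac12\bigr)^2$ has the conditional Lipschitz shadowing property in $[-\rho,\infty)$.
   Context: For continuous $g\colon[0,\infty)\times\mathbb R\to\mathbb R$ and $\tau\in(0,\infty]$, a pseudosolution of $x'=g(t,x)$ on $[0,\tau)$ is a $C^1$ map $y\colon[0,\tau)\to\mathbb R$ with $\sigma_y:=\sup_{0\le t<\tau}|y'(t)-g(t,y(t))|<\infty$. The equation has the conditional Lipschitz shadowing property in $H\neq\emptyset$ if there exist $\varepsilon_0,\kappa>0$ such that whenever $0<\varepsilon\le\varepsilon_0$ and $y$ is a pseudosolution on $[0,\tau)$ ($\tau\in(0,\infty]$) with $\sigma_y\le\varepsilon$ and $y(t)\in H$ for all $t\in[0,\tau)$, there is a solution $x$ of the equation defined on $[0,\tau)$ with $\sup_{0\le t<\tau}|x(t)-y(t)|\le\kappa\varepsilon$. *)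

(* Defs.v *)
From Stdlib Require Import Reals.
From Coquelicot Require Import Coquelicot.
Open Scope R_scope.

Definition in_I (tau : Rbar) (t : R) : Prop := 0 <= t /\ Rbar_lt t tau.

Definition deriv_on (tau : Rbar) (y dy : R -> R) : Prop :=
  forall t, in_I tau t ->
    filterlim (fun s => (y s - y t) / (s - t))
      (within (fun s => in_I tau s /\ s <> t) (locally t)) (locally (dy t)).

Definition cont_on (tau : Rbar) (f : R -> R) : Prop :=
  forall t, in_I tau t ->
    filterlim f (within (in_I tau) (locally t)) (locally (f t)).

Definition C1_on (tau : Rbar) (y dy : R -> R) : Prop :=
  deriv_on tau y dy /\ cont_on tau dy.

Definition pseudosolution (g : R -> R -> R) (tau : Rbar) (y dy : R -> R) : Prop :=
  C1_on tau y dy /\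
  exists M : R, forall t, in_I tau t -> Rabs (dy t - g t (y t)) <= M.

Definition defect_le (g : R -> R -> R) (tau : Rbar) (y dy : R -> R) (eps : R) : Prop :=
  forall t, in_I tau t -> Rabs (dy t - g t (y t)) <= eps.

Definition solution_on (g : R -> R -> R) (tau : Rbar) (x : R -> R) : Prop :=
  deriv_on tau x (fun t => g t (x t)).

Definition cond_Lip_shadowing (g : R -> R -> R) (H : R -> Prop) : Prop :=
  (exists y0, H y0) /\
  exists eps0 kappa : R, 0 < eps0 /\ 0 < kappa /\
    forall (eps : R) (tau : Rbar) (y dy : R -> R),
      0 < eps -> eps <= eps0 -> Rbar_lt 0 tau ->
      pseudosolution g tau y dy ->
      defect_le g tau y dy eps ->
      (forall t, in_I tau t -> H (y t)) ->
      exists x : R -> R, solution_on g tau x /\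
        forall t, in_I tau t -> Rabs (x t - y t) <= kappa * eps.

(* Main.v *)
Require Import Defs.
From Stdlib Require Import Reals Lra.
From Coquelicot Require Import Coquelicot.
Open Scope R_scope.

Lemma ballR x (e:R) y : ball x e y <-> Rabs (y - x) < e.
Proof. reflexivity. Qed.

Lemma margin (T : Rbar) (t : R) : Rbar_lt t T -> exists d, 0 < d /\ forall s, s < t + d -> Rbar_lt s T.
Proof.
  destruct T as [b| |]; simpl; intros H.
  - exists (b - t). split; [lra|]. intros; simpl; lra.
  - exists 1. split; [lra|]. auto.
  - contradiction.
Qed.

Lemma Rbar_lt_le (T : Rbar) (s t : R) : s <= t -> Rbar_lt t T -> Rbar_lt s T.
Proof. destruct T; simpl; auto; lra. Qed.

Lemma fl_eps (P : R -> Prop) (t l : R) (q : R -> R) :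
  filterlim q (within P (locally t)) (locally l) ->
  forall e, 0 < e -> exists d : posreal, forall s, ball t d s -> P s -> Rabs (q s - l) < e.
Proof.
  intros H e He.
  assert (H' := H (ball l e) (locally_ball l (mkposreal e He))).
  exact H'.
Qed.

Lemma deriv_interior T f df t : deriv_on T f df -> 0 < t -> Rbar_lt t T ->
  derivable_pt_lim f t (df t).
Proof.
  intros H Ht HtT e He.
  destruct (margin T t HtT) as [m [Hm Hm']].
  assert (Hi : in_I T t) by (split; [lra|auto]).
  destruct (fl_eps _ _ _ _ (H t Hi) e He) as [d Hd].
  assert (Hp : 0 < Rmin d (Rmin t m)).
  { destruct d as [d dp]; simpl. repeat apply Rmin_pos; lra. }
  exists (mkposreal _ Hp). intros h Hh0 Hh. simpl in Hh.
  specialize (Hd (t + h)).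
  assert (Hb : ball t d (t + h)).
  { apply ballR. replace (t + h - t) with h by ring.
    eapply Rlt_le_trans; [exact Hh| apply Rmin_l]. }
  specialize (Hd Hb).
  assert (HP : in_I T (t + h) /\ t + h <> t).
  { pose proof (Rmin_r d (Rmin t m)). pose proof (Rmin_l t m).
    pose proof (Rmin_r t m). pose proof (Rle_abs h). pose proof (Rle_abs (-h)).
    rewrite Rabs_Ropp in *.
    split; [split|].
    - lra.
    - apply Hm'. lra.
    - lra. }
  specialize (Hd HP). simpl in Hd.
  replace (t + h - t) with h in Hd by ring. exact Hd.
Qed.

Lemma deriv_cont T f df t : deriv_on T f df -> in_I T t ->
  forall e, 0 < e -> exists d, 0 < d /\ forall s, in_I T s -> Rabs (s - t) < d ->
    Rabs (f s - f t) < e.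
Proof.
  intros H Ht e He.
  destruct (fl_eps _ _ _ _ (H t Ht) 1 Rlt_0_1) as [d Hd].
  set (L := Rabs (df t) + 1).
  assert (HL : 0 < L) by (unfold L; pose proof (Rabs_pos (df t)); lra).
  assert (Hp : 0 < Rmin d (e / L)).
  { destruct d as [d dp]; simpl. apply Rmin_pos; [lra|]. apply Rdiv_lt_0_compat; lra. }
  exists (Rmin d (e / L)). split; [exact Hp|].
  intros s Hs Hst.
  destruct (Req_dec s t) as [->|Hne].
  { replace (f t - f t) with 0 by ring. rewrite Rabs_R0. lra. }
  specialize (Hd s). 
  assert (Hb : ball t d s).
  { apply ballR. eapply Rlt_le_trans; [exact Hst| apply Rmin_l]. }
  specialize (Hd Hb (conj Hs Hne)).
  assert (Hst0 : s - t <> 0) by lra.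
  replace (f s - f t) with ((f s - f t) / (s - t) * (s - t)) by (field; auto).
  rewrite Rabs_mult.
  assert (Hq : Rabs ((f s - f t) / (s - t)) <= L).
  { unfold L. replace ((f s - f t) / (s - t)) with
      (((f s - f t) / (s - t) - df t) + df t) by ring.
    eapply Rle_trans; [apply Rabs_triang|]. lra. }
  assert (Hst2 : Rabs (s - t) < e / L).
  { eapply Rlt_le_trans; [exact Hst| apply Rmin_r]. }
  assert (Habs : 0 < Rabs (s - t)) by (apply Rabs_pos_lt; auto).
  apply Rle_lt_trans with (L * Rabs (s - t)).
  { apply Rmult_le_compat_r; [apply Rabs_pos| exact Hq]. }
  apply Rmult_lt_reg_r with (/ L). { apply Rinv_0_lt_compat; lra. }
  replace (L * Rabs (s - t) * / L) with (Rabs (s - t)) by (field; lra).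
  exact Hst2.
Qed.

Lemma key (T : Rbar) (w dw : R -> R) (K : R) :
  (forall t, in_I T t -> forall e, 0 < e -> exists d, 0 < d /\
      forall s, in_I T s -> Rabs (s - t) < d -> Rabs (w s - w t) < e) ->
  (forall t, 0 < t -> Rbar_lt t T -> derivable_pt_lim w t (dw t)) ->
  w 0 <= K ->
  (forall t, in_I T t -> K < w t -> dw t < 0) ->
  forall t, in_I T t -> w t <= K.
Proof.
  intros Hc Hd H0 Hs t1 Ht1.
  destruct (Rle_dec (w t1) K) as [|Hgt]; auto. exfalso. apply Rnot_le_lt in Hgt.
  destruct Ht1 as [Ht10 Ht1T].
  set (E := fun t => 0 <= t <= t1 /\ w t <= K).
  assert (HbE : bound E) by (exists t1; intros x [[? ?] ?]; auto).
  assert (HnE : exists x, E x) by (exists 0; unfold E; split; [lra|auto]).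
  destruct (completeness E HbE HnE) as [s [Hub Hlst]].
  assert (Hs0 : 0 <= s) by (apply Hub; unfold E; split; [lra|auto]).
  assert (Hst1 : s <= t1) by (apply Hlst; intros x [[? ?] ?]; auto).
  assert (HsI : in_I T s) by (split; [auto| eapply Rbar_lt_le; eauto]).
  assert (Ws : w s <= K).
  { destruct (Rle_dec (w s) K) as [|Hn]; auto. exfalso. apply Rnot_le_lt in Hn.
    destruct (Hc s HsI (w s - K) ltac:(lra)) as [d [Hd0 Hdd]].
    destruct (Req_dec s 0) as [Hz|Hz].
    { subst s. lra. }
    set (s2 := s - Rmin d s / 2).
    assert (Hm1 := Rmin_l d s). assert (Hm2 := Rmin_r d s).
    assert (Hm0 : 0 < Rmin d s) by (apply Rmin_pos; lra).
    assert (Hub2 : is_upper_bound E s2).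
    { intros x Hx. destruct (Rle_dec x s2) as [|Hx2]; auto. exfalso.
      apply Rnot_le_lt in Hx2. pose proof (Hub x Hx) as Hxs.
      destruct Hx as [[Hx0 Hxt] HxK].
      assert (HxI : in_I T x) by (split; [auto| apply Rbar_lt_le with t1; [lra|auto]]).
      assert (Ha : Rabs (x - s) < d).
      { rewrite Rabs_left1 by lra. unfold s2 in Hx2. lra. }
      specialize (Hdd x HxI Ha).
      pose proof (Rle_abs (- (w x - w s))). rewrite Rabs_Ropp in *. lra. }
    specialize (Hlst s2 Hub2). unfold s2 in Hlst. lra. }
  assert (Hlt : s < t1) by (destruct (Req_dec s t1); [subst; lra| lra]).
  assert (Hafter : forall r, s < r <= t1 -> K < w r).
  { intros r Hr. destruct (Rle_dec (w r) K) as [Hr2|Hr2].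
    - assert (E r) by (unfold E; split; [lra|auto]).
      specialize (Hub r H). lra.
    - lra. }
  destruct (Hc s HsI (w t1 - K) ltac:(lra)) as [d [Hd0 Hdd]].
  set (s' := s + Rmin d (t1 - s) / 2).
  assert (Hm1 := Rmin_l d (t1 - s)). assert (Hm2 := Rmin_r d (t1 - s)).
  assert (Hm0 : 0 < Rmin d (t1 - s)) by (apply Rmin_pos; lra).
  assert (Hs'I : in_I T s') by (split; [unfold s'; lra| apply Rbar_lt_le with t1; [unfold s'; lra| auto]]).
  assert (Ha : Rabs (s' - s) < d) by (rewrite Rabs_right by (unfold s'; lra); unfold s'; lra).
  specialize (Hdd s' Hs'I Ha).
  pose proof (Rle_abs (w s' - w s)).
  destruct (MVT_cor2 w dw s' t1) as [c [Hc1 Hc2]].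
  { unfold s'; lra. }
  { intros c Hc'. apply Hd. unfold s' in Hc'; lra. apply Rbar_lt_le with t1; [lra|auto]. }
  assert (HcI : in_I T c) by (split; [unfold s' in Hc2; lra| apply Rbar_lt_le with t1; [lra|auto]]).
  assert (Hwc : K < w c) by (apply Hafter; unfold s' in Hc2; lra).
  specialize (Hs c HcI Hwc).
  assert (dw c * (t1 - s') < 0) by (apply Rmult_neg_pos; [auto| lra]).
  lra.
Qed.
Lemma pt_lim_within (P : R -> Prop) f l (t : R) :
  derivable_pt_lim f t l -> (forall s, P s -> s <> t) ->
  filterlim (fun s => (f s - f t) / (s - t)) (within P (locally t)) (locally l).
Proof.
  intros H HP Q [eps HQ].
  destruct (H eps (cond_pos eps)) as [d Hd].
  exists d. intros y Hy Py. apply HQ. apply ballR.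
  apply ballR in Hy.
  assert (Hne : y - t <> 0) by (specialize (HP y Py); lra).
  specialize (Hd (y - t) Hne Hy).
  assert (Ey : (t + (y - t) = y :> R)) by ring. rewrite Ey in Hd. exact Hd.
Qed.
Lemma sol_deriv (u0 t : R) : 0 < u0 -> 0 <= t ->
  derivable_pt_lim (fun t => u0 / (1 + u0 * t) - 1/2) t (- ((u0 / (1 + u0 * t) - 1/2) + 1/2)^2).
Proof.
  intros Hu Ht. apply is_derive_Reals.
  assert (Hp : 0 < 1 + u0 * t) by nra.
  auto_derive. lra.
  field. lra.
Qed.

Lemma cont_sub T (f g : R -> R) :
  (forall t, in_I T t -> forall e, 0 < e -> exists d, 0 < d /\
      forall s, in_I T s -> Rabs (s - t) < d -> Rabs (f s - f t) < e) ->
  (forall t, in_I T t -> forall e, 0 < e -> exists d, 0 < d /\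
      forall s, in_I T s -> Rabs (s - t) < d -> Rabs (g s - g t) < e) ->
  (forall t, in_I T t -> forall e, 0 < e -> exists d, 0 < d /\
      forall s, in_I T s -> Rabs (s - t) < d -> Rabs ((f s - g s) - (f t - g t)) < e).
Proof.
  intros Hf Hg t Ht e He.
  destruct (Hf t Ht (e/2) ltac:(lra)) as [d1 [Hd1 H1]].
  destruct (Hg t Ht (e/2) ltac:(lra)) as [d2 [Hd2 H2]].
  exists (Rmin d1 d2). split; [apply Rmin_pos; lra|].
  intros s Hs Hst.
  specialize (H1 s Hs (Rlt_le_trans _ _ _ Hst (Rmin_l _ _))).
  specialize (H2 s Hs (Rlt_le_trans _ _ _ Hst (Rmin_r _ _))).
  replace ((f s - g s) - (f t - g t)) with ((f s - f t) + - (g s - g t)) by ring.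
  eapply Rle_lt_trans; [apply Rabs_triang|]. rewrite Rabs_Ropp. lra.
Qed.

Lemma cont_opp T (f : R -> R) :
  (forall t, in_I T t -> forall e, 0 < e -> exists d, 0 < d /\
      forall s, in_I T s -> Rabs (s - t) < d -> Rabs (f s - f t) < e) ->
  (forall t, in_I T t -> forall e, 0 < e -> exists d, 0 < d /\
      forall s, in_I T s -> Rabs (s - t) < d -> Rabs (- f s - - f t) < e).
Proof.
  intros Hf t Ht e He. destruct (Hf t Ht e He) as [d [Hd H]].
  exists d. split; auto. intros s Hs Hst.
  replace (- f s - - f t) with (- (f s - f t)) by ring. rewrite Rabs_Ropp. auto.
Qed.

Theorem mainTheorem11 :
  forall rho : R, 0 < rho -> rho < 1/2 ->
    cond_Lip_shadowing (fun (_ : R) (x : R) => - (x + 1/2)^2)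
                       (fun x => - rho <= x).
Proof.
  intros rho Hr0 Hr1. split; [exists 0; lra|].
  set (c := 1/2 - rho).
  assert (Hc : 0 < c) by (unfold c; lra).
  exists 1, (1 / c). split; [lra|]. split; [apply Rdiv_lt_0_compat; lra|].
  intros eps tau y dy Heps Heps1 Htau [[Hyd Hyc] _] Hdef HH.
  set (u0 := y 0 + 1/2).
  assert (Hu0 : 0 < u0).
  { unfold u0. assert (in_I tau 0) by (split; [lra|auto]). specialize (HH 0 H). simpl in HH.
    unfold c in *. lra. }
  set (x := fun t => u0 / (1 + u0 * t) - 1/2).
  assert (Hxd : forall t, 0 <= t -> derivable_pt_lim x t (- (x t + 1/2)^2)).
  { intros t Ht. apply sol_deriv; auto. }
  assert (Hxdon : deriv_on tau x (fun t => - (x t + 1/2)^2)).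
  { intros t Ht. apply pt_lim_within; [apply Hxd; apply Ht| intros s [_ Hs]; auto]. }
  assert (Hupos : forall t, 0 <= t -> 0 < x t + 1/2).
  { intros t Ht. unfold x. replace (u0 / (1 + u0 * t) - 1 / 2 + 1 / 2) with (u0 / (1 + u0 * t)) by ring.
    apply Rdiv_lt_0_compat; nra. }
  exists x. split; [exact Hxdon|].
  set (K := eps / c).
  assert (HK : K * c = eps) by (unfold K; field; lra).
  assert (HK0 : 0 < K) by (unfold K; apply Rdiv_lt_0_compat; lra).
  set (w := fun t => y t - x t).
  set (dw := fun t => dy t - - (x t + 1/2)^2).
  assert (Hwc : forall t, in_I tau t -> forall e, 0 < e -> exists d, 0 < d /\
      forall s, in_I tau s -> Rabs (s - t) < d -> Rabs (w s - w t) < e).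
  { apply cont_sub; intros t Ht; [apply (deriv_cont _ _ dy)| apply (deriv_cont _ _ (fun t => - (x t + 1/2)^2))]; auto. }
  assert (Hwd : forall t, 0 < t -> Rbar_lt t tau -> derivable_pt_lim w t (dw t)).
  { intros t Ht HtT. apply derivable_pt_lim_minus.
    - apply (deriv_interior tau); auto.
    - apply Hxd; lra. }
  assert (Hw0 : w 0 = 0) by (unfold w, x; simpl; unfold u0; field; lra).
  assert (Hfacts : forall t, in_I tau t ->
     Rabs (dw t - (- (y t + 1/2)^2 + (x t + 1/2)^2)) <= eps /\ c <= y t + 1/2 /\ 0 < x t + 1/2).
  { intros t Ht. split; [|split].
    - specialize (Hdef t Ht). simpl in Hdef. unfold dw.
      replace (dy t - - (x t + 1 / 2) ^ 2 - (- (y t + 1 / 2) ^ 2 + (x t + 1 / 2) ^ 2))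
        with (dy t - - (y t + 1 / 2) ^ 2) by ring. exact Hdef.
    - specialize (HH t Ht). simpl in HH. unfold c. lra.
    - apply Hupos, Ht. }
  assert (Hup : forall t, in_I tau t -> w t <= K).
  { apply (key tau w dw K Hwc Hwd); [lra|].
    intros t Ht HwK. destruct (Hfacts t Ht) as [Hd [Hv Hu]].
    pose proof (Rle_abs (dw t - (- (y t + 1/2)^2 + (x t + 1/2)^2))).
    unfold w in HwK.
    assert (Hprod : c * K < (y t + 1/2 + (x t + 1/2)) * (y t - x t)).
    { apply Rle_lt_trans with (c * (y t - x t)); [apply Rmult_le_compat_l; lra|].
      apply Rmult_lt_compat_r; lra. }
    assert (E : - (y t + 1/2)^2 + (x t + 1/2)^2 = - ((y t + 1/2 + (x t + 1/2)) * (y t - x t))) by ring.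
    lra. }
  assert (Hlo : forall t, in_I tau t -> - w t <= K).
  { apply (key tau (fun t => - w t) (fun t => - dw t) K).
    - apply cont_opp; auto.
    - intros t Ht HtT. apply derivable_pt_lim_opp. auto.
    - rewrite Hw0. lra.
    - intros t Ht HwK. destruct (Hfacts t Ht) as [Hd [Hv Hu]].
      pose proof (Rle_abs (- (dw t - (- (y t + 1/2)^2 + (x t + 1/2)^2)))).
      rewrite Rabs_Ropp in *.
      unfold w in HwK.
      assert (Hprod : c * K < (y t + 1/2 + (x t + 1/2)) * (x t - y t)).
      { apply Rle_lt_trans with (c * (x t - y t)); [apply Rmult_le_compat_l; lra|].
        apply Rmult_lt_compat_r; lra. }
      assert (E : - (y t + 1/2)^2 + (x t + 1/2)^2 = ((y t + 1/2 + (x t + 1/2)) * (x t - y t))) by ring.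
      lra. }
  intros t Ht. specialize (Hup t Ht). specialize (Hlo t Ht). unfold w in *.
  replace (1 / c * eps) with K by (unfold K; field; lra).
  rewrite <- Rabs_Ropp. replace (- (x t - y t)) with (y t - x t) by ring.
  apply Rabs_le. lra.
Qed.
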